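(* Let $\mathbf{C}$ be a cartesian closed category, $D$ a natural system on $\mathbf{C}$, and $D\to\mathbf{E}\xrightarrow{p}\mathbf{C}$ a linear extension of $\mathbf{C}$ by $D$. Then $D$ is a cartesian closed natural system if and only if $\mathbf{E}$ is cartesian closed and $p$ is a cartesian closed functor. Moreover, in that case, if $\mathbf{C}$ is given the structure of an $S$-sorted CCC $\iota:\mathbf{CFam}_S\to\mathbf{C}$, then there exists $\tilde\iota:\mathbf{CFam}_S\to\mathbf{E}$ making $\mathbf{E}$ an $S$-sorted CCC such that $p$ is a morphism of $S$-sorted CCCs.
   Context: The category of factorizations $F\mathbf{C}$ has as objects the morphisms of $\mathbf{C}$; a morphism $(a,b):f\to g$ from $f:A\to B$ to $g:A'\to B'$ is a pair $a:A'\to A$, $b:B\to B'$ with $bfa=g$. A natural system on $\mathbf{C}$ is a functor $D:F\mathbf{C}\to\mathbf{Ab}$; write $D_f=D(f)$, $a_*=D(1,a):D_f\to D_{af}$, $a^*=D(a,1):D_g\to D_{ga}$. A linear extension $D\to\mathbf{E}\xrightarrow{p}\mathbf{C}$ is a category $\mathbf{E}$ with a full, identity-on-objects functor $p$ and, for each $f$ in $\mathbf{C}$, a transitive free action $+:D_f\times p^{-1}(f)\to p^{-1}(f)$ such that $(\xi+\tilde f)\circ(\eta+\tilde g)=f_*\eta+g^*\xi+\tilde f\circ\tilde g$. $D$ is cartesian if for every $f:X\to X_1\times\dots\times X_n$ the map $D_f\to\prod_k D_{\pi_k f}$, $\xi\mapsto(\pi_{k*}\xi)_k$, is an isomorphism.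 For cartesian $D$, $g:X\to W$ and an object $Y$, $\phi_g:D_g\times D_{\pi_2}\to D_{g\times1_Y}$ is $\pi_1^*\times1$ followed by the inverse of the cartesian isomorphism $D_{g\times1_Y}\to D_{g\pi_1}\times D_{\pi_2}$. $D$ is cartesian closed if it is cartesian and for each $f:X\times Y\to Z$ the map $D_{\lambda f}\to D_f$, $\xi\mapsto\mathrm{ev}^Y_{Z*}\phi_{\lambda f}(\xi,0)$, is an isomorphism, where $\mathrm{ev}^Y_Z:Z^Y\times Y\to Z$ is evaluation and $\lambda f$ the curried morphism. $\mathsf{BiMag}_S$ is the set of formal expressions generated from the elements of $S$ and $1$ by $X\times Y$ and $Y^X$; $\mathbf{CFam}_S$ is the free cartesian closed category with object set $\mathsf{BiMag}_S$ and no generating morphisms. An $S$-sorted CCC is a CCC $\mathbf{C}$ with $\mathrm{Ob}(\mathbf{C})=\mathsf{BiMag}_S$ and a cartesian closed identity-on-objects functor $\iota:\mathbf{CFam}_S\to\mathbf{C}$; a morphism of $S$-sorted CCCs is a functor $F$ with $F\circ\iota=\iota'$. *)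

(* Defs.v *)
From mathcomp Require Import all_boot all_algebra.
Set Implicit Arguments.
Unset Strict Implicit.
Unset Printing Implicit Defensive.
Import GRing.Theory.
Local Open Scope ring_scope.

(* Categories with object type O (so that identity-on-objects functors *)
(* between categories with the same object type are just Hom maps).    *)
Record Category (O : Type) := {
  Hom : O -> O -> Type;
  cid : forall X, Hom X X;
  cmp : forall X Y Z, Hom Y Z -> Hom X Y -> Hom X Z;
  cmp_id_l : forall X Y (f : Hom X Y), cmp (cid Y) f = f;
  cmp_id_r : forall X Y (f : Hom X Y), cmp f (cid X) = f;
  cmp_assoc : forall X Y Z W (h : Hom Z W) (g : Hom Y Z) (f : Hom X Y),
      cmp h (cmp g f) = cmp (cmp h g) f }.
Arguments Hom {O} C X Y : rename.
Arguments cid {O} C X : rename.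
Arguments cmp {O} C {X Y Z} g f : rename.

Section Universal.
Context {O : Type} (C : Category O).

Definition is_terminal (T : O) : Prop :=
  forall X, exists! f : Hom C X T, True.

Definition is_product (X Y P : O) (q1 : Hom C P X) (q2 : Hom C P Y) : Prop :=
  forall Z (f : Hom C Z X) (g : Hom C Z Y),
    exists! h : Hom C Z P, cmp C q1 h = f /\ cmp C q2 h = g.

Definition is_nproduct (n : nat) (Xs : 'I_n -> O) (P : O)
    (pr : forall k, Hom C P (Xs k)) : Prop :=
  forall Z (fs : forall k, Hom C Z (Xs k)),
    exists! h : Hom C Z P, forall k, cmp C (pr k) h = fs k.

(* exponential diagram: Ex = Z^Y, with product (P,q1,q2) of Ex and Y and
   evaluation ev : P -> Z *)
Definition is_exponential (Y Z Ex P : O) (q1 : Hom C P Ex) (q2 : Hom C P Y)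
    (ev : Hom C P Z) : Prop :=
  @is_product Ex Y P q1 q2 /\
  forall X Q (r1 : Hom C Q X) (r2 : Hom C Q Y), @is_product X Y Q r1 r2 ->
    forall f : Hom C Q Z,
      exists! h : Hom C X Ex,
        forall m : Hom C Q P, cmp C q1 m = cmp C h r1 -> cmp C q2 m = r2 ->
          cmp C ev m = f.

Definition is_ccc : Prop :=
  (exists T, is_terminal T) /\
  (forall X Y, exists P q1 q2, @is_product X Y P q1 q2) /\
  (forall Y Z, exists Ex P q1 q2 ev, @is_exponential Y Z Ex P q1 q2 ev).

End Universal.
Arguments is_terminal {O} C T.
Arguments is_product {O} C {X Y P} q1 q2.
Arguments is_nproduct {O} C {n} Xs P pr.
Arguments is_exponential {O} C {Y Z Ex P} q1 q2 ev.
Arguments is_ccc {O} C.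

Record CCC {O : Type} (C : Category O) := {
  c_one : O;
  c_bang : forall X, Hom C X c_one;
  c_bang_uniq : forall X (f : Hom C X c_one), f = c_bang X;
  c_prod : O -> O -> O;
  c_p1 : forall X Y, Hom C (c_prod X Y) X;
  c_p2 : forall X Y, Hom C (c_prod X Y) Y;
  c_pair : forall Z X Y, Hom C Z X -> Hom C Z Y -> Hom C Z (c_prod X Y);
  c_p1_pair : forall Z X Y (f : Hom C Z X) (g : Hom C Z Y),
      cmp C (c_p1 X Y) (c_pair f g) = f;
  c_p2_pair : forall Z X Y (f : Hom C Z X) (g : Hom C Z Y),
      cmp C (c_p2 X Y) (c_pair f g) = g;
  c_pair_eta : forall Z X Y (h : Hom C Z (c_prod X Y)),
      c_pair (cmp C (c_p1 X Y) h) (cmp C (c_p2 X Y) h) = h;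
  c_exp : O -> O -> O;   (* c_exp Z Y = Z^Y *)
  c_ev : forall Y Z, Hom C (c_prod (c_exp Z Y) Y) Z;
  c_curry : forall X Y Z, Hom C (c_prod X Y) Z -> Hom C X (c_exp Z Y);
  c_beta : forall X Y Z (f : Hom C (c_prod X Y) Z),
      cmp C (c_ev Y Z) (c_pair (cmp C (c_curry f) (c_p1 X Y)) (c_p2 X Y)) = f;
  c_eta : forall X Y Z (h : Hom C X (c_exp Z Y)),
      c_curry (cmp C (c_ev Y Z) (c_pair (cmp C h (c_p1 X Y)) (c_p2 X Y))) = h }.
Arguments c_one {O C} c : rename.
Arguments c_bang {O C} c X : rename.
Arguments c_prod {O C} c X Y : rename.
Arguments c_p1 {O C} c X Y : rename.
Arguments c_p2 {O C} c X Y : rename.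
Arguments c_pair {O C} c {Z X Y} f g : rename.
Arguments c_exp {O C} c Z Y : rename.
Arguments c_ev {O C} c Y Z : rename.
Arguments c_curry {O C} c {X Y Z} f : rename.

Definition times1 {O} {C : Category O} (CC : CCC C) {X W : O} (g : Hom C X W)
    (Y : O) : Hom C (c_prod CC X Y) (c_prod CC W Y) :=
  c_pair CC (cmp C g (c_p1 CC X Y)) (c_p2 CC X Y).

Record IOFunctor {O : Type} (E C : Category O) := {
  fmap : forall X Y, Hom E X Y -> Hom C X Y;
  fmap_id : forall X, fmap (cid E X) = cid C X;
  fmap_cmp : forall X Y Z (g : Hom E Y Z) (f : Hom E X Y),
      fmap (cmp E g f) = cmp C (fmap g) (fmap f) }.
Arguments fmap {O E C} p {X Y} f : rename.

Definition ccc_functor {O} {E C : Category O} (p : IOFunctor E C) : Prop :=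
  (forall T, is_terminal E T -> is_terminal C T) /\
  (forall X Y P (q1 : Hom E P X) (q2 : Hom E P Y),
      is_product E q1 q2 -> is_product C (fmap p q1) (fmap p q2)) /\
  (forall Y Z Ex P (q1 : Hom E P Ex) (q2 : Hom E P Y) (ev : Hom E P Z),
      is_exponential E q1 q2 ev ->
      is_exponential C (fmap p q1) (fmap p q2) (fmap p ev)).

(* Natural systems: functors F C -> Ab.  A morphism (a,b) : f -> g in the
   category of factorizations is a pair a : A' -> A, b : B -> B' with
   b f a = g; ns_act f g a b e is D(a,b) : D_f -> D_g. *)
Record NatSys {O : Type} (C : Category O) := {
  ns_grp : forall A B, Hom C A B -> zmodType;
  ns_act : forall A B A' B' (f : Hom C A B) (g : Hom C A' B')
      (a : Hom C A' A) (b : Hom C B B'),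
      cmp C b (cmp C f a) = g -> ns_grp f -> ns_grp g;
  ns_act_add : forall A B A' B' (f : Hom C A B) (g : Hom C A' B')
      (a : Hom C A' A) (b : Hom C B B') (e : cmp C b (cmp C f a) = g)
      (x y : ns_grp f), ns_act e (x + y) = ns_act e x + ns_act e y;
  ns_act_id : forall A B (f : Hom C A B)
      (e : cmp C (cid C B) (cmp C f (cid C A)) = f) (x : ns_grp f),
      ns_act e x = x;
  ns_act_cmp : forall A B A' B' A'' B'' (f : Hom C A B) (g : Hom C A' B')
      (h : Hom C A'' B'') (a : Hom C A' A) (b : Hom C B B')
      (a' : Hom C A'' A') (b' : Hom C B' B'')
      (e1 : cmp C b (cmp C f a) = g) (e2 : cmp C b' (cmp C g a') = h)
      (e3 : cmp C (cmp C b' b) (cmp C f (cmp C a a')) = h) (x : ns_grp f),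
      ns_act e2 (ns_act e1 x) = ns_act e3 x }.
Arguments ns_grp {O C} D {A B} f : rename.
Arguments ns_act {O C} D {A B A' B' f g a b} e x : rename.

Section NSops.
Context {O : Type} {C : Category O}.

Lemma push_eq A B B' (b : Hom C B B') (f : Hom C A B) :
  cmp C b (cmp C f (cid C A)) = cmp C b f.
Proof. by rewrite cmp_id_r. Qed.

Lemma pull_eq A' A B (a : Hom C A' A) (f : Hom C A B) :
  cmp C (cid C B) (cmp C f a) = cmp C f a.
Proof. by rewrite cmp_id_l. Qed.

Definition push (D : NatSys C) {A B B'} (b : Hom C B B') (f : Hom C A B) :
  ns_grp D f -> ns_grp D (cmp C b f) := ns_act D (push_eq b f).

Definition pull (D : NatSys C) {A' A B} (a : Hom C A' A) (f : Hom C A B) :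
  ns_grp D f -> ns_grp D (cmp C f a) := ns_act D (pull_eq a f).

Definition cartesian_ns (D : NatSys C) : Prop :=
  forall n (Xs : 'I_n -> O) (P : O) (pr : forall k, Hom C P (Xs k)),
    is_nproduct C Xs P pr ->
    forall X (f : Hom C X P),
      bijective (fun xi : ns_grp D f =>
                   (fun k => @push D _ _ _ (pr k) f xi)
                   : forall k, ns_grp D (cmp C (pr k) f)).

Variable CC : CCC C.

Lemma phi1_eq X Y W (g : Hom C X W) :
  cmp C (c_p1 CC W Y) (cmp C (times1 CC g Y) (cid C _)) =
  cmp C g (c_p1 CC X Y).
Proof. by rewrite cmp_id_r /times1 c_p1_pair. Qed.

Lemma phi2_eq X Y W (g : Hom C X W) :
  cmp C (c_p2 CC W Y) (cmp C (times1 CC g Y) (cid C _)) = c_p2 CC X Y.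
Proof. by rewrite cmp_id_r /times1 c_p2_pair. Qed.

Lemma ev_eq X Y Z (f : Hom C (c_prod CC X Y) Z) :
  cmp C (c_ev CC Y Z) (cmp C (times1 CC (c_curry CC f) Y) (cid C _)) = f.
Proof. by rewrite cmp_id_r /times1 c_beta. Qed.

(* D cartesian closed: cartesian, and for every f : X x Y -> Z the map
   D_{lambda f} -> D_f, xi |-> ev_* phi_{lambda f}(xi, 0) is an isomorphism.
   Here phi_g(xi,0) is the (unique, by cartesianness) zeta in D_{g x 1_Y}
   whose components under the cartesian iso are (pi_1^* xi, 0). *)
Definition ccc_ns (D : NatSys C) : Prop :=
  cartesian_ns D /\
  forall X Y Z (f : Hom C (c_prod CC X Y) Z),
    exists Phi : ns_grp D (c_curry CC f) -> ns_grp D f,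
      (forall (xi : ns_grp D (c_curry CC f))
              (zeta : ns_grp D (times1 CC (c_curry CC f) Y)),
          ns_act D (phi1_eq Y (c_curry CC f)) zeta
            = @pull D _ _ _ (c_p1 CC X Y) (c_curry CC f) xi ->
          ns_act D (phi2_eq Y (c_curry CC f)) zeta = 0 ->
          Phi xi = ns_act D (ev_eq f) zeta) /\
      bijective Phi.

End NSops.
Arguments push {O C} D {A B B'} b f : rename.
Arguments pull {O C} D {A' A B} a f : rename.
Arguments cartesian_ns {O C} D : rename.
Arguments ccc_ns {O C} CC D : rename.

Record LinExt {O : Type} {C E : Category O} (D : NatSys C)
    (p : IOFunctor E C) := {
  le_full : forall A B (f : Hom C A B), exists ft : Hom E A B, fmap p ft = f;
  le_act : forall A B (f : Hom C A B), ns_grp D f -> Hom E A B -> Hom E A B;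
  le_act_fib : forall A B (f : Hom C A B) xi (ft : Hom E A B),
      fmap p ft = f -> fmap p (@le_act A B f xi ft) = f;
  le_act0 : forall A B (f : Hom C A B) (ft : Hom E A B),
      fmap p ft = f -> @le_act A B f 0 ft = ft;
  le_actD : forall A B (f : Hom C A B) (xi eta : ns_grp D f) (ft : Hom E A B),
      fmap p ft = f -> @le_act A B f (xi + eta) ft = @le_act A B f xi (@le_act A B f eta ft);
  le_transitive : forall A B (f : Hom C A B) (ft gt : Hom E A B),
      fmap p ft = f -> fmap p gt = f -> exists xi : ns_grp D f, @le_act A B f xi ft = gt;
  le_free : forall A B (f : Hom C A B) (xi : ns_grp D f) (ft : Hom E A B),
      fmap p ft = f -> @le_act A B f xi ft = ft -> xi = 0;
  le_cmp : forall A B B' (f : Hom C B B') (g : Hom C A B)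
      (ft : Hom E B B') (gt : Hom E A B) (xi : ns_grp D f) (eta : ns_grp D g),
      fmap p ft = f -> fmap p gt = g ->
      cmp E (@le_act B B' f xi ft) (@le_act A B g eta gt) =
      @le_act A B' (cmp C f g) (push D f g eta + pull D g f xi) (cmp E ft gt) }.
Arguments le_act {O C E D p} L {A B f} xi ft : rename.

(* BiMag_S and the free cartesian closed category CFam_S, presented by
   combinators modulo the CCC equations (a congruence). *)
Inductive BiMag (S : Type) : Type :=
| bsort : S -> BiMag S
| bone : BiMag S
| bprod : BiMag S -> BiMag S -> BiMag S
| bexp : BiMag S -> BiMag S -> BiMag S.   (* bexp Y X = Y^X *)
Arguments bone {S} : rename.

Inductive Tm {S : Type} : BiMag S -> BiMag S -> Type :=
| tid X : Tm X X
| tcmp X Y Z : Tm Y Z -> Tm X Y -> Tm X Z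
| tbang X : Tm X bone
| tp1 X Y : Tm (bprod X Y) X
| tp2 X Y : Tm (bprod X Y) Y
| tpair Z X Y : Tm Z X -> Tm Z Y -> Tm Z (bprod X Y)
| tev Y Z : Tm (bprod (bexp Z Y) Y) Z
| tcurry X Y Z : Tm (bprod X Y) Z -> Tm X (bexp Z Y).

Inductive teq {S : Type} : forall X Y : BiMag S, Tm X Y -> Tm X Y -> Prop :=
| teq_refl X Y (t : Tm X Y) : teq t t
| teq_sym X Y (t u : Tm X Y) : teq t u -> teq u t
| teq_trans X Y (t u v : Tm X Y) : teq t u -> teq u v -> teq t v
| teq_cmp X Y Z (t t' : Tm Y Z) (u u' : Tm X Y) :
    teq t t' -> teq u u' -> teq (tcmp t u) (tcmp t' u')
| teq_pair Z X Y (t t' : Tm Z X) (u u' : Tm Z Y) :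
    teq t t' -> teq u u' -> teq (tpair t u) (tpair t' u')
| teq_curry X Y Z (t t' : Tm (bprod X Y) Z) :
    teq t t' -> teq (tcurry t) (tcurry t')
| teq_id_l X Y (t : Tm X Y) : teq (tcmp (tid Y) t) t
| teq_id_r X Y (t : Tm X Y) : teq (tcmp t (tid X)) t
| teq_assoc X Y Z W (h : Tm Z W) (g : Tm Y Z) (f : Tm X Y) :
    teq (tcmp h (tcmp g f)) (tcmp (tcmp h g) f)
| teq_bang X (t : Tm X bone) : teq t (tbang X)
| teq_p1 Z X Y (t : Tm Z X) (u : Tm Z Y) : teq (tcmp (tp1 X Y) (tpair t u)) t
| teq_p2 Z X Y (t : Tm Z X) (u : Tm Z Y) : teq (tcmp (tp2 X Y) (tpair t u)) u
| teq_pair_eta Z X Y (h : Tm Z (bprod X Y)) :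
    teq (tpair (tcmp (tp1 X Y) h) (tcmp (tp2 X Y) h)) h
| teq_beta X Y Z (t : Tm (bprod X Y) Z) :
    teq (tcmp (tev Y Z) (tpair (tcmp (tcurry t) (tp1 X Y)) (tp2 X Y))) t
| teq_eta X Y Z (h : Tm X (bexp Z Y)) :
    teq (tcurry (tcmp (tev Y Z) (tpair (tcmp h (tp1 X Y)) (tp2 X Y)))) h.

Definition sorted_ccc {S : Type} (C : Category (BiMag S))
    (iota : forall X Y : BiMag S, Tm X Y -> Hom C X Y) : Prop :=
  (forall X Y (t u : Tm X Y), teq t u -> iota X Y t = iota X Y u) /\
  (forall X, iota X X (tid X) = cid C X) /\
  (forall X Y Z (t : Tm Y Z) (u : Tm X Y),
      iota X Z (tcmp t u) = cmp C (iota Y Z t) (iota X Y u)) /\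
  is_terminal C bone /\
  (forall X Y, is_product C (iota _ _ (tp1 X Y)) (iota _ _ (tp2 X Y))) /\
  (forall Y Z, is_exponential C (iota _ _ (tp1 (bexp Z Y) Y))
                                (iota _ _ (tp2 (bexp Z Y) Y))
                                (iota _ _ (tev Y Z))).

(* Main.v *)
From mathcomp Require Import all_boot all_algebra.
From Stdlib Require Import ProofIrrelevance FunctionalExtensionality ClassicalEpsilon.
Require Import Defs.
Set Implicit Arguments.
Unset Strict Implicit.
Unset Printing Implicit Defensive.
Import GRing.Theory.

Local Notation "g ∘ f" := (cmp _ g f) (at level 40, left associativity).




Section Generic.
Context {O : Type} (K : Category O).

Lemma prod_uniq {X Y P} {q1 : Hom K P X} {q2 : Hom K P Y} :
  is_product K q1 q2 -> forall Z (h h' : Hom K Z P),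
  q1 ∘ h = q1 ∘ h' -> q2 ∘ h = q2 ∘ h' -> h = h'.
Proof.
move=> H Z h h' e1 e2; case: (H Z (q1 ∘ h) (q2 ∘ h)) => k [_ Hk].
by rewrite -(Hk h (conj erefl erefl)) (Hk h' (conj (esym e1) (esym e2))).
Qed.

Lemma prod_ex {X Y P} {q1 : Hom K P X} {q2 : Hom K P Y} :
  is_product K q1 q2 -> forall Z (f : Hom K Z X) (g : Hom K Z Y),
  exists h, q1 ∘ h = f /\ q2 ∘ h = g.
Proof. by move=> H Z f g; case: (H Z f g) => h [Hh _]; exists h. Qed.

Lemma nprod_uniq {n} {Xs : 'I_n -> O} {P} {pr : forall k, Hom K P (Xs k)} :
  is_nproduct K Xs P pr -> forall Z (h h' : Hom K Z P),
  (forall k, pr k ∘ h = pr k ∘ h') -> h = h'.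
Proof.
move=> H Z h h' e; case: (H Z (fun k => pr k ∘ h)) => k [_ Hk].
by rewrite -(Hk h (fun _ => erefl)) (Hk h' (fun k => esym (e k))).
Qed.

Lemma nprod_ex {n} {Xs : 'I_n -> O} {P} {pr : forall k, Hom K P (Xs k)} :
  is_nproduct K Xs P pr -> forall Z (fs : forall k, Hom K Z (Xs k)),
  exists h, forall k, pr k ∘ h = fs k.
Proof. by move=> H Z fs; case: (H Z fs) => h [Hh _]; exists h. Qed.

Lemma prod_iso {X Y P P'} {q1 : Hom K P X} {q2 : Hom K P Y}
  {q1' : Hom K P' X} {q2' : Hom K P' Y} :
  is_product K q1 q2 -> is_product K q1' q2' ->
  exists (u : Hom K P P') (w : Hom K P' P),
    [/\ q1' ∘ u = q1, q2' ∘ u = q2, q1 ∘ w = q1', q2 ∘ w = q2' &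
        u ∘ w = cid K P' /\ w ∘ u = cid K P].
Proof.
move=> H H'.
have [u [u1 u2]] := prod_ex H' q1 q2.
have [w [w1 w2]] := prod_ex H q1' q2'.
exists u, w; split=> //; split.
  by apply: (prod_uniq H'); rewrite cmp_id_r cmp_assoc ?u1 ?u2 ?w1 ?w2.
by apply: (prod_uniq H); rewrite cmp_id_r cmp_assoc ?u1 ?u2 ?w1 ?w2.
Qed.

Definition exp_at {Y Z Ex P X Q} (q1 : Hom K P Ex) (q2 : Hom K P Y)
  (ev : Hom K P Z) (r1 : Hom K Q X) (r2 : Hom K Q Y) : Prop :=
  forall f : Hom K Q Z, exists! h : Hom K X Ex,
    forall m : Hom K Q P, q1 ∘ m = h ∘ r1 -> q2 ∘ m = r2 -> ev ∘ m = f.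

Lemma exp_spec {Y Z Ex P X Q} (q1 : Hom K P Ex) (q2 : Hom K P Y)
  (ev : Hom K P Z) (r1 : Hom K Q X) (r2 : Hom K Q Y) :
  is_product K q1 q2 -> forall h m0 f,
  q1 ∘ m0 = h ∘ r1 -> q2 ∘ m0 = r2 ->
  (forall m, q1 ∘ m = h ∘ r1 -> q2 ∘ m = r2 -> ev ∘ m = f) <-> ev ∘ m0 = f.
Proof.
move=> HP h m0 f e1 e2; split; first by move=> H; apply: H.
move=> e m e1' e2'; suff -> : m = m0 by [].
by apply: (prod_uniq HP); rewrite ?e1 ?e2 ?e1' ?e2'.
Qed.

Lemma exp_at_change {Y Z Ex P X Q Q'} (q1 : Hom K P Ex) (q2 : Hom K P Y)
  (ev : Hom K P Z) (r1 : Hom K Q X) (r2 : Hom K Q Y)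
  (r1' : Hom K Q' X) (r2' : Hom K Q' Y) :
  is_product K r1 r2 -> is_product K r1' r2' ->
  exp_at q1 q2 ev r1 r2 -> exp_at q1 q2 ev r1' r2'.
Proof.
move=> HQ HQ' Hex f'.
have [k [k' [k1 k2 k1' k2' [kk' k'k]]]] := prod_iso HQ' HQ.
case: (Hex (f' ∘ k')) => h [Hh Hu].
exists h; split.
  move=> m' e1 e2.
  have := Hh (m' ∘ k').
  rewrite !cmp_assoc e1 e2 -!cmp_assoc k1' k2' => /(_ erefl erefl) e.
  by rewrite -[m'](cmp_id_r) -k'k (cmp_assoc m') (cmp_assoc ev) e -cmp_assoc k'k cmp_id_r.
move=> h'' H''; apply: Hu => m e1 e2.
have := H'' (m ∘ k).
rewrite !cmp_assoc e1 e2 -!cmp_assoc k1 k2 => /(_ erefl erefl) e.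
by rewrite -[m](cmp_id_r) -kk' (cmp_assoc m) (cmp_assoc ev) e.
Qed.

Lemma exp_of_at {Y Z Ex P} (q1 : Hom K P Ex) (q2 : Hom K P Y) (ev : Hom K P Z) :
  is_product K q1 q2 ->
  (forall X, exists Q (r1 : Hom K Q X) (r2 : Hom K Q Y),
      is_product K r1 r2 /\ exp_at q1 q2 ev r1 r2) ->
  is_exponential K q1 q2 ev.
Proof.
move=> HP H; split=> // X Q r1 r2 HQ.
have [Q0 [s1 [s2 [HQ0 Hat]]]] := H X.
exact: exp_at_change HQ0 HQ Hat.
Qed.

Lemma exp_iso {Y Z Ex Ex' P P'} (q1 : Hom K P Ex) (q2 : Hom K P Y)
  (ev : Hom K P Z) (q1' : Hom K P' Ex') (q2' : Hom K P' Y)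
  (u : Hom K Ex' Ex) (w : Hom K Ex Ex') (m0 : Hom K P' P) :
  is_exponential K q1 q2 ev -> is_product K q1' q2' ->
  u ∘ w = cid K Ex -> w ∘ u = cid K Ex' ->
  q1 ∘ m0 = u ∘ q1' -> q2 ∘ m0 = q2' ->
  is_exponential K q1' q2' (ev ∘ m0).
Proof.
move=> [HP Hex] HP' uw wu m01 m02; split=> // X Q r1 r2 HQ f.
case: (Hex X Q r1 r2 HQ f) => h [Hh Hu].
exists (w ∘ h); split.
  move=> m' e1 e2; rewrite -cmp_assoc; apply: Hh.
    by rewrite cmp_assoc m01 -cmp_assoc e1 !cmp_assoc uw cmp_id_l.
  by rewrite cmp_assoc m02.
move=> h'' H''.
have -> : h'' = w ∘ (u ∘ h'') by rewrite cmp_assoc wu cmp_id_l.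
congr (w ∘ _); apply: Hu => m e1 e2.
have [m' [e1' e2']] := prod_ex HP' (h'' ∘ r1) r2.
have -> : m = m0 ∘ m'.
  by apply: (prod_uniq HP); rewrite cmp_assoc ?m01 ?m02 -?cmp_assoc ?e1' ?e2' ?e1 ?e2 ?cmp_assoc.
by rewrite cmp_assoc; apply: H''.
Qed.

Lemma exp_unique_iso {Y Z Ex Ex' P P'} (q1 : Hom K P Ex) (q2 : Hom K P Y)
  (ev : Hom K P Z) (q1' : Hom K P' Ex') (q2' : Hom K P' Y) (ev' : Hom K P' Z) :
  is_exponential K q1 q2 ev -> is_exponential K q1' q2' ev' ->
  exists (u : Hom K Ex' Ex) (w : Hom K Ex Ex') (m0 : Hom K P' P),
   [/\ u ∘ w = cid K Ex, w ∘ u = cid K Ex', q1 ∘ m0 = u ∘ q1', q2 ∘ m0 = q2'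
     & ev ∘ m0 = ev'].
Proof.
move=> [HP Hex] [HP' Hex'].
case: (Hex _ _ _ _ HP' ev') => u [Hu _].
case: (Hex' _ _ _ _ HP ev) => w [Hw _].
have [m0 [m01 m02]] := prod_ex HP (u ∘ q1') q2'.
have [n0 [n01 n02]] := prod_ex HP' (w ∘ q1) q2.
have evm0 : ev ∘ m0 = ev' by apply: Hu.
have evn0 : ev' ∘ n0 = ev by apply: Hw.
have idu : forall (g : Hom K Ex Ex), (forall m, q1 ∘ m = g ∘ q1 -> q2 ∘ m = q2 -> ev ∘ m = ev) -> g = cid K Ex.
  move=> g Hg; case: (Hex _ _ _ _ HP ev) => g0 [_ Hg0].
  rewrite -(Hg0 g Hg); apply: Hg0 => m; rewrite cmp_id_l => e1 e2.
  have -> : m = cid K P by apply: (prod_uniq HP); rewrite cmp_id_r ?e1 ?e2.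
  by rewrite cmp_id_r.
have idu' : forall (g : Hom K Ex' Ex'), (forall m, q1' ∘ m = g ∘ q1' -> q2' ∘ m = q2' -> ev' ∘ m = ev') -> g = cid K Ex'.
  move=> g Hg; case: (Hex' _ _ _ _ HP' ev') => g0 [_ Hg0].
  rewrite -(Hg0 g Hg); apply: Hg0 => m; rewrite cmp_id_l => e1 e2.
  have -> : m = cid K P' by apply: (prod_uniq HP'); rewrite cmp_id_r ?e1 ?e2.
  by rewrite cmp_id_r.
exists u, w, m0; split=> //.
  apply: idu => m e1 e2.
  have -> : m = m0 ∘ n0.
    apply: (prod_uniq HP); rewrite ?e1 ?e2 cmp_assoc ?m01 ?m02 ?n02 //.
    by rewrite -(cmp_assoc u q1' n0) n01 !cmp_assoc.
  by rewrite cmp_assoc evm0 evn0.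
apply: idu' => m e1 e2.
have -> : m = n0 ∘ m0.
  apply: (prod_uniq HP'); rewrite ?e1 ?e2 cmp_assoc ?n01 ?n02 ?m02 //.
  by rewrite -(cmp_assoc w q1 m0) m01 !cmp_assoc.
by rewrite cmp_assoc evn0 evm0.
Qed.

Lemma nprod_transport {n} {Xs : 'I_n -> O} {P P'} {pr' : forall k, Hom K P' (Xs k)}
  (u : Hom K P P') (w : Hom K P' P) :
  is_nproduct K Xs P' pr' -> u ∘ w = cid K P' -> w ∘ u = cid K P ->
  is_nproduct K Xs P (fun k => pr' k ∘ u).
Proof.
move=> H uw wu Z fs.
have [h Hh] := nprod_ex H fs.
exists (w ∘ h); split.
  by move=> k; rewrite -cmp_assoc (cmp_assoc u) uw cmp_id_l.
move=> h'' H''.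
have e : u ∘ h'' = h by apply: (nprod_uniq H) => k; rewrite Hh cmp_assoc H''.
by rewrite -e cmp_assoc wu cmp_id_l.
Qed.

Lemma nprod_iso {n} {Xs : 'I_n -> O} {P P'} {pr : forall k, Hom K P (Xs k)}
  {pr' : forall k, Hom K P' (Xs k)} :
  is_nproduct K Xs P pr -> is_nproduct K Xs P' pr' ->
  exists (u : Hom K P P') (w : Hom K P' P),
    [/\ forall k, pr' k ∘ u = pr k, u ∘ w = cid K P' & w ∘ u = cid K P].
Proof.
move=> H H'.
have [u Hu] := nprod_ex H' pr.
have [w Hw] := nprod_ex H pr'.
exists u, w; split=> //.
  by apply: (nprod_uniq H') => k; rewrite cmp_id_r cmp_assoc Hu Hw.
by apply: (nprod_uniq H) => k; rewrite cmp_id_r cmp_assoc Hw Hu.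
Qed.

End Generic.

Section Generic2.
Context {O : Type} (K : Category O).

Definition Xs2 (X Y : O) (k : 'I_2) : O :=
  match nat_of_ord k with 0 => X | _ => Y end.
Definition sel2 {Z X Y : O} (f : Hom K Z X) (g : Hom K Z Y) :
  forall k : 'I_2, Hom K Z (Xs2 X Y k) :=
  fun k => match nat_of_ord k as m
             return Hom K Z (match m with 0 => X | _ => Y end) with
           | 0 => f | _ => g end.

Lemma bin2 {X Y P} (q1 : Hom K P X) (q2 : Hom K P Y) :
  is_product K q1 q2 -> is_nproduct K (Xs2 X Y) P (sel2 q1 q2).
Proof.
move=> H Z fs.
have [h [h1 h2]] := prod_ex H (fs ord0) (fs (@Ordinal 2 1 isT)).
have fsE : forall m (lt lt' : m < 2), fs (Ordinal lt) = fs (Ordinal lt').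
  by move=> m lt1 lt2; rewrite (bool_irrelevance lt1 lt2).
exists h; split.
  move=> [[|[|m]] lt] /=.
  - by rewrite h1; exact: (fsE 0 (ltn0Sn 1)).
  - by rewrite h2; exact: (fsE 1 isT lt).
  - by [].
by move=> h' H'; apply: (prod_uniq H); rewrite ?h1 ?h2; [exact: (esym (H' ord0)) | exact: (esym (H' (@Ordinal 2 1 isT)))].
Qed.

Lemma bin2_inv {X Y P} (q1 : Hom K P X) (q2 : Hom K P Y) :
  is_nproduct K (Xs2 X Y) P (sel2 q1 q2) -> is_product K q1 q2.
Proof.
move=> H Z f g.
have [h Hh] := nprod_ex H (sel2 f g).
exists h; split; first by split; [apply: (Hh ord0) | apply: (Hh (@Ordinal 2 1 isT))].
move=> h' [e1 e2]; apply: (nprod_uniq H) => -[[|[|m]] lt] //=.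
  by rewrite e1; apply: (Hh (Ordinal lt)).
by rewrite e2; apply: (Hh (Ordinal lt)).
Qed.

Lemma ord0_False : 'I_0 -> False.
Proof. by case=> m; rewrite ltn0. Qed.

Lemma term0 {Xs : 'I_0 -> O} T (pr : forall k, Hom K T (Xs k)) :
  is_terminal K T -> is_nproduct K Xs T pr.
Proof.
move=> H Z fs; case: (H Z) => h [_ Hh]; exists h; split.
  by move=> k; case: (ord0_False k).
by move=> h' _; apply: Hh.
Qed.

Lemma nprod0_term {Xs : 'I_0 -> O} T (pr : forall k, Hom K T (Xs k)) :
  is_nproduct K Xs T pr -> is_terminal K T.
Proof.
move=> H X.
have fs : forall k : 'I_0, Hom K X (Xs k) by move=> k; case: (ord0_False k).
have [h _] := nprod_ex H fs.
exists h; split=> // h' _; apply: (nprod_uniq H) => k; case: (ord0_False k).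
Qed.

Definition castH {A B B'} (e : B = B') (g : Hom K A B) : Hom K A B' :=
  eq_rect B (Hom K A) g B' e.

Lemma castH_id {A B} (e : B = B) (g : Hom K A B) : castH e g = g.
Proof. by rewrite (proof_irrelevance _ e erefl). Qed.

Lemma unlift_someE {m} (i j : 'I_m) k : unlift i j = Some k -> j = lift i k.
Proof. by case: unliftP => // k' -> [<-]. Qed.

Lemma unlift_noneE {m} (i j : 'I_m) : unlift i j = None -> i = j.
Proof. by case: unliftP => // j' ->; rewrite liftK. Qed.

Section Succ.
Variables (n : nat) (Xs : 'I_n.+1 -> O) (R : O)
  (rr : forall j : 'I_n, Hom K R (Xs (lift ord0 j))) (P : O)
  (q1 : Hom K P (Xs ord0)) (q2 : Hom K P R).

Definition prS_aux (k : 'I_n.+1) (o : option 'I_n) :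
  unlift ord0 k = o -> Hom K P (Xs k) :=
  match o with
  | Some j => fun e => castH (f_equal Xs (esym (unlift_someE e))) (rr j ∘ q2)
  | None => fun e => castH (f_equal Xs (unlift_noneE e)) q1
  end.

Definition prS (k : 'I_n.+1) : Hom K P (Xs k) := prS_aux (erefl (unlift ord0 k)).

Lemma prS_aux0 o (e : unlift ord0 ord0 = o) : prS_aux e = q1.
Proof.
case: o e => [j|] e /=; last by rewrite castH_id.
by exfalso; move: e; rewrite unlift_none.
Qed.

Lemma prS0 : prS ord0 = q1.
Proof. exact: prS_aux0. Qed.

Lemma prS_auxl j o (e : unlift ord0 (lift ord0 j) = o) : prS_aux e = rr j ∘ q2.
Proof.
case: o e => [j'|] e /=; last by exfalso; move: e; rewrite liftK.
have ejj : j = j' by move: e; rewrite liftK => -[].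
by subst j'; rewrite castH_id.
Qed.

Lemma prSl j : prS (lift ord0 j) = rr j ∘ q2.
Proof. exact: prS_auxl. Qed.

Lemma nprodS :
  is_nproduct K (fun j => Xs (lift ord0 j)) R rr -> is_product K q1 q2 ->
  is_nproduct K Xs P prS.
Proof.
move=> HR HP Z fs.
have [r Hr] := nprod_ex HR (fun j => fs (lift ord0 j)).
have [h [h1 h2]] := prod_ex HP (fs ord0) r.
exists h; split.
  move=> k; case: (unliftP ord0 k) => [j ->|->].
    by rewrite prSl -cmp_assoc h2 Hr.
  by rewrite prS0 h1.
move=> h' H'; apply: (prod_uniq HP).
  by have := H' ord0; rewrite prS0 h1 => ->.
apply: (nprod_uniq HR) => j; rewrite h2 Hr.
by have := H' (lift ord0 j); rewrite prSl -cmp_assoc => ->.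
Qed.
End Succ.

End Generic2.

Section CCCfacts.
Context {O : Type} {C : Category O} (CC : CCC C).

Lemma ccc_prod X Y : is_product C (c_p1 CC X Y) (c_p2 CC X Y).
Proof.
move=> Z f g; exists (c_pair CC f g); split; first by rewrite c_p1_pair c_p2_pair.
by move=> h' [e1 e2]; rewrite -(c_pair_eta h') e1 e2.
Qed.

Lemma ccc_term : is_terminal C (c_one CC).
Proof. by move=> X; exists (c_bang CC X); split=> // h' _; rewrite (c_bang_uniq h'). Qed.

Lemma ccc_exp Y Z :
  is_exponential C (c_p1 CC (c_exp CC Z Y) Y) (c_p2 CC (c_exp CC Z Y) Y) (c_ev CC Y Z).
Proof.
apply: exp_of_at; first exact: ccc_prod.
move=> X; exists (c_prod CC X Y), (c_p1 CC X Y), (c_p2 CC X Y); split; first exact: ccc_prod.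
move=> f; exists (c_curry CC f); split.
  have := @exp_spec _ _ _ _ _ _ _ _ _ _ (c_ev CC Y Z) (c_p1 CC X Y) (c_p2 CC X Y)
           (@ccc_prod (c_exp CC Z Y) Y) _ (times1 CC (c_curry CC f) Y) f.
  rewrite /times1 c_p1_pair c_p2_pair => /(_ _ erefl erefl) [_]; apply.
  by rewrite c_beta.
move=> h' H'; rewrite -(c_eta h'); congr (c_curry CC _).
by apply/esym; apply: H'; rewrite ?c_p1_pair ?c_p2_pair.
Qed.

End CCCfacts.



Lemma inj_surj_bij {A B : Type} (F : A -> B) :
  injective F -> (forall b, exists a, F a = b) -> bijective F.
Proof.
move=> Fi Fs.
exists (fun b => proj1_sig (constructive_indefinite_description _ (Fs b))).
  move=> a; case: constructive_indefinite_description => a' Ha' /=; exact: Fi.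
by move=> b; case: constructive_indefinite_description.
Qed.

Section NSfacts.
Context {O : Type} {C : Category O} (D : NatSys C).

Lemma ns_act0 A B A' B' (f : Hom C A B) (g : Hom C A' B') a b
  (e : cmp C b (cmp C f a) = g) : ns_act D e 0%R = 0%R.
Proof. by apply/(addrI (ns_act D e 0%R)); rewrite -ns_act_add !addr0. Qed.

Lemma ns_actN A B A' B' (f : Hom C A B) (g : Hom C A' B') a b
  (e : cmp C b (cmp C f a) = g) x : ns_act D e (- x)%R = (- ns_act D e x)%R.
Proof. by apply/(addrI (ns_act D e x)); rewrite -ns_act_add !subrr ns_act0. Qed.

Lemma ns_act_ext A B A' B' (f : Hom C A B) (g : Hom C A' B') (a a' : Hom C A' A)
  (b b' : Hom C B B') (e : cmp C b (cmp C f a) = g) (e' : cmp C b' (cmp C f a') = g) x :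
  a = a' -> b = b' -> ns_act D e x = ns_act D e' x.
Proof. by move=> ea eb; subst a' b'; rewrite (proof_irrelevance _ e e'). Qed.

End NSfacts.

Section LinExtFacts.
Context {O : Type} {C E : Category O} {D : NatSys C} {p : IOFunctor E C}
  (L : LinExt D p).

Lemma act_add A B (f : Hom C A B) (ft : Hom E A B) (xi eta : ns_grp D f) :
  fmap p ft = f -> le_act L xi (le_act L eta ft) = le_act L (xi + eta)%R ft.
Proof. by move=> H; rewrite (le_actD L xi eta H). Qed.

Lemma act_inj A B (f : Hom C A B) (ft : Hom E A B) (xi eta : ns_grp D f) :
  fmap p ft = f -> le_act L xi ft = le_act L eta ft -> xi = eta.
Proof.
move=> H e; apply/eqP; rewrite -subr_eq0; apply/eqP.
apply: (le_free (l := L) (le_act_fib L eta H)).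
by rewrite act_add // subrK.
Qed.

Lemma cmp_act_l A B B' (f : Hom C B B') (g : Hom C A B) (ft : Hom E B B')
  (gt : Hom E A B) (xi : ns_grp D f) :
  fmap p ft = f -> fmap p gt = g ->
  cmp E (le_act L xi ft) gt = le_act L (pull D g f xi) (cmp E ft gt).
Proof.
move=> Hf Hg; rewrite -{1}(le_act0 L Hg) (le_cmp L xi 0%R Hf Hg).
by rewrite /push ns_act0 add0r.
Qed.

Lemma cmp_act_r A B B' (f : Hom C B B') (g : Hom C A B) (ft : Hom E B B')
  (gt : Hom E A B) (eta : ns_grp D g) :
  fmap p ft = f -> fmap p gt = g ->
  cmp E ft (le_act L eta gt) = le_act L (push D f g eta) (cmp E ft gt).
Proof.
move=> Hf Hg; rewrite -{1}(le_act0 L Hf) (le_cmp L 0%R eta Hf Hg).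
by rewrite /pull ns_act0 addr0.
Qed.

Lemma le_act_ns A B A' B' (f : Hom C A B) (g : Hom C A' B') (a : Hom C A' A)
  (b : Hom C B B') (e : cmp C b (cmp C f a) = g) (x : ns_grp D f)
  (ta : Hom E A' A) (tb : Hom E B B') (ft : Hom E A B) :
  fmap p ta = a -> fmap p tb = b -> fmap p ft = f ->
  le_act L (ns_act D e x) (cmp E tb (cmp E ft ta)) = cmp E tb (cmp E (le_act L x ft) ta).
Proof.
move=> Ha Hb Hf; case: g / e.
have Hfa : fmap p (cmp E ft ta) = cmp C f a by rewrite fmap_cmp Ha Hf.
rewrite (cmp_act_l x Hf Ha) (cmp_act_r _ Hb Hfa).
congr (le_act L _ _).
have e3 : cmp C (cmp C b (cid C B)) (cmp C f (cmp C a (cid C A'))) = cmp C b (cmp C f a).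
  by rewrite !cmp_id_r.
rewrite /push /pull (ns_act_cmp _ _ e3).
by apply: ns_act_ext; rewrite cmp_id_r.
Qed.

Lemma over_id_inv A (g : Hom E A A) :
  fmap p g = cid C A -> exists w, cmp E w g = cid E A /\ cmp E g w = cid E A.
Proof.
move=> Hg; have Hid : fmap p (cid E A) = cid C A := fmap_id p A.
have [xi exi] := le_transitive L Hid Hg.
have key : forall u v : ns_grp D (cid C A),
    (push D (cid C A) (cid C A) u + pull D (cid C A) (cid C A) v)%R =
    ns_act D (push_eq (cid C A) (cid C A)) (u + v)%R.
  move=> u v; rewrite ns_act_add; congr (_ + _)%R.
  by rewrite /pull; apply: ns_act_ext.
have Hii : fmap p (cmp E (cid E A) (cid E A)) = cmp C (cid C A) (cid C A).
  by rewrite fmap_cmp Hid.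
exists (le_act L (- xi)%R (cid E A)); rewrite -exi !(le_cmp L _ _ Hid Hid) !key.
by rewrite addNr addrN ns_act0 (le_act0 L Hii) cmp_id_l.
Qed.

Lemma lift_iso A B (u : Hom C A B) (v : Hom C B A) (ut : Hom E A B) (vt : Hom E B A) :
  fmap p ut = u -> fmap p vt = v -> cmp C v u = cid C A -> cmp C u v = cid C B ->
  exists wt, cmp E wt ut = cid E A /\ cmp E ut wt = cid E B.
Proof.
move=> Hu Hv vu uv.
have h1 : fmap p (cmp E vt ut) = cid C A by rewrite fmap_cmp Hu Hv.
have h2 : fmap p (cmp E ut vt) = cid C B by rewrite fmap_cmp Hu Hv.
have [w1 [w1l w1r]] := over_id_inv h1.
have [w2 [w2l w2r]] := over_id_inv h2.
have lr : cmp E w1 vt = cmp E vt w2.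
  rewrite -[cmp E w1 vt]cmp_id_r -w2r !cmp_assoc -(cmp_assoc w1 vt ut) w1l cmp_id_l.
  by [].
exists (cmp E w1 vt); split; first by rewrite -cmp_assoc.
by rewrite lr cmp_assoc.
Qed.

Definition cart_at {n} {Xs : 'I_n -> O} {P} (pr : forall k, Hom C P (Xs k)) : Prop :=
  forall X (f : Hom C X P),
    bijective (fun xi : ns_grp D f =>
                 (fun k => push D (pr k) f xi) : forall k, ns_grp D (cmp C (pr k) f)).

Lemma np_lift {n} {Xs : 'I_n -> O} {P} {pr : forall k, Hom C P (Xs k)}
  (prt : forall k, Hom E P (Xs k)) :
  is_nproduct C Xs P pr -> (forall k, fmap p (prt k) = pr k) -> cart_at pr ->
  is_nproduct E Xs P prt.
Proof.
move=> HC Hpr Hcart Z fs.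
have [h Hh] := nprod_ex HC (fun k => fmap p (fs k)).
have [ht Hht] := le_full L h.
have Hk : forall k, fmap p (cmp E (prt k) ht) = cmp C (pr k) h.
  by move=> k; rewrite fmap_cmp Hpr Hht.
have Hk' : forall k, fmap p (fs k) = cmp C (pr k) h by move=> k; rewrite Hh.
have al : forall k, exists a : ns_grp D (cmp C (pr k) h),
    le_act L a (cmp E (prt k) ht) = fs k := fun k => le_transitive L (Hk k) (Hk' k).
pose al' k := proj1_sig (constructive_indefinite_description _ (al k)).
have Hal : forall k, le_act L (al' k) (cmp E (prt k) ht) = fs k.
  by move=> k; rewrite /al'; case: constructive_indefinite_description.
have [g Hg1 Hg2] := Hcart Z h.
have Hxi : forall k, push D (pr k) h (g al') = al' k.
  by move=> k; exact: (equal_f_dep (Hg2 al') k).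
exists (le_act L (g al') ht); split.
  by move=> k; rewrite (cmp_act_r _ (Hpr k) Hht) Hxi Hal.
move=> ht' H'.
have Hp' : fmap p ht' = h.
  apply: (nprod_uniq HC) => k.
  have : fmap p (cmp E (prt k) ht') = fmap p (fs k) by rewrite H'.
  by rewrite fmap_cmp Hpr Hh => ->.
have [xi' exi'] := le_transitive L Hht Hp'.
rewrite -exi'; congr (le_act L _ _).
have eF : (fun k => push D (pr k) h xi') = al'.
  apply: functional_extensionality_dep => k; apply: (act_inj (Hk k)).
  by rewrite -(cmp_act_r _ (Hpr k) Hht) exi' H' Hal.
by rewrite -eF Hg1.
Qed.

Lemma np_cart {n} {Xs : 'I_n -> O} {P} {pr : forall k, Hom C P (Xs k)}
  (prt : forall k, Hom E P (Xs k)) :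
  is_nproduct C Xs P pr -> (forall k, fmap p (prt k) = pr k) ->
  is_nproduct E Xs P prt -> cart_at pr.
Proof.
move=> HC Hpr HE X f; have [ft Hft] := le_full L f.
have Hkf : forall k, fmap p (cmp E (prt k) ft) = cmp C (pr k) f.
  by move=> k; rewrite fmap_cmp Hpr Hft.
apply: inj_surj_bij.
  move=> xi eta eF; apply: (act_inj Hft); apply: (nprod_uniq HE) => k.
  have /= e := equal_f_dep eF k.
  by rewrite !(cmp_act_r _ (Hpr k) Hft) e.
move=> be.
have [g Hg] := nprod_ex HE (fun k => le_act L (be k) (cmp E (prt k) ft)).
have Hpg : fmap p g = f.
  apply: (nprod_uniq HC) => k.
  have : fmap p (cmp E (prt k) g) = cmp C (pr k) f.
    by rewrite Hg; apply: le_act_fib.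
  by rewrite fmap_cmp Hpr.
have [xi exi] := le_transitive L Hft Hpg.
exists xi; apply: functional_extensionality_dep => k /=.
apply: (act_inj (Hkf k)).
by rewrite -(cmp_act_r _ (Hpr k) Hft) exi Hg.
Qed.

Lemma lift_prod {X Y P} (q1 : Hom C P X) (q2 : Hom C P Y) (qt1 : Hom E P X)
  (qt2 : Hom E P Y) :
  cartesian_ns D -> is_product C q1 q2 -> fmap p qt1 = q1 -> fmap p qt2 = q2 ->
  is_product E qt1 qt2.
Proof.
move=> Hc HP H1 H2; apply: bin2_inv.
have HP2 := bin2 HP.
apply: (np_lift HP2 _ (Hc _ _ _ _ HP2)).
by case=> [[|[|m]] lt].
Qed.

Lemma lift_term T : cartesian_ns D -> is_terminal C T -> is_terminal E T.
Proof.
move=> Hc HT.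
have H0 := @term0 _ C (fun _ => T) T (fun _ => cid C T) HT.
apply: (@nprod0_term _ E (fun _ => T) T (fun _ => cid E T)).
apply: (np_lift H0 _ (Hc _ _ _ _ H0)).
by move=> k; case: (ord0_False k).
Qed.

End LinExtFacts.



Section ExpCore.
Context {O : Type} {C E : Category O} {D : NatSys C} {p : IOFunctor E C}
  (L : LinExt D p) (CC : CCC C) (Y Z X : O)
  (t1' : Hom E (c_prod CC (c_exp CC Z Y) Y) (c_exp CC Z Y))
  (t2' : Hom E (c_prod CC (c_exp CC Z Y) Y) Y)
  (tev : Hom E (c_prod CC (c_exp CC Z Y) Y) Z)
  (t1 : Hom E (c_prod CC X Y) X) (t2 : Hom E (c_prod CC X Y) Y).
Hypotheses (H1' : fmap p t1' = c_p1 CC (c_exp CC Z Y) Y)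
  (H2' : fmap p t2' = c_p2 CC (c_exp CC Z Y) Y) (Hev : fmap p tev = c_ev CC Y Z)
  (H1 : fmap p t1 = c_p1 CC X Y) (H2 : fmap p t2 = c_p2 CC X Y)
  (HPt : is_product E t1' t2').

Lemma mt_over (ht : Hom E X (c_exp CC Z Y)) mt :
  t1' ∘ mt = ht ∘ t1 -> t2' ∘ mt = t2 -> fmap p mt = times1 CC (fmap p ht) Y.
Proof.
move=> e1 e2; have HP := ccc_prod CC (X := c_exp CC Z Y) (Y := Y).
apply: (prod_uniq HP); rewrite /times1 ?c_p1_pair ?c_p2_pair.
  by rewrite -H1' -fmap_cmp e1 fmap_cmp H1.
by rewrite -H2' -fmap_cmp e2 H2.
Qed.

Lemma spec_over (ht : Hom E X (c_exp CC Z Y)) ft :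
  (forall mt, t1' ∘ mt = ht ∘ t1 -> t2' ∘ mt = t2 -> tev ∘ mt = ft) ->
  fmap p ht = c_curry CC (fmap p ft).
Proof.
move=> Hs; have [mt [e1 e2]] := prod_ex HPt (ht ∘ t1) t2.
have := Hs mt e1 e2 => <-.
by rewrite fmap_cmp Hev (mt_over e1 e2) c_eta.
Qed.

Section Fixf.
Variables (f : Hom C (c_prod CC X Y) Z) (ht : Hom E X (c_exp CC Z Y))
  (m0t : Hom E (c_prod CC X Y) (c_prod CC (c_exp CC Z Y) Y)).
Hypotheses (Hht : fmap p ht = c_curry CC f) (m01 : t1' ∘ m0t = ht ∘ t1)
  (m02 : t2' ∘ m0t = t2).

Lemma m0_over : fmap p m0t = times1 CC (c_curry CC f) Y.
Proof. by rewrite (mt_over m01 m02) Hht. Qed.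

Lemma ev_m0_over : fmap p (tev ∘ m0t) = f.
Proof. by rewrite fmap_cmp Hev m0_over /times1 c_beta. Qed.

Lemma htt1_over : fmap p (ht ∘ t1) = cmp C (c_curry CC f) (c_p1 CC X Y).
Proof. by rewrite fmap_cmp Hht H1. Qed.

Lemma zeta_eq1 (zeta : ns_grp D (times1 CC (c_curry CC f) Y)) :
  le_act L (ns_act D (phi1_eq CC Y (c_curry CC f)) zeta) (ht ∘ t1)
  = t1' ∘ le_act L zeta m0t.
Proof.
have := le_act_ns L (phi1_eq CC Y (c_curry CC f)) zeta (fmap_id p _) H1' m0_over.
by rewrite !cmp_id_r m01.
Qed.

Lemma zeta_eq2 (zeta : ns_grp D (times1 CC (c_curry CC f) Y)) :
  le_act L (ns_act D (phi2_eq CC Y (c_curry CC f)) zeta) t2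
  = t2' ∘ le_act L zeta m0t.
Proof.
have := le_act_ns L (phi2_eq CC Y (c_curry CC f)) zeta (fmap_id p _) H2' m0_over.
by rewrite !cmp_id_r m02.
Qed.

Lemma zeta_ev (zeta : ns_grp D (times1 CC (c_curry CC f) Y)) :
  tev ∘ le_act L zeta m0t = le_act L (ns_act D (ev_eq f) zeta) (tev ∘ m0t).
Proof.
have := le_act_ns L (ev_eq f) zeta (fmap_id p _) Hev m0_over.
by rewrite !cmp_id_r.
Qed.

Lemma zeta_fwd xi (zeta : ns_grp D (times1 CC (c_curry CC f) Y)) :
  ns_act D (phi1_eq CC Y (c_curry CC f)) zeta = pull D (c_p1 CC X Y) (c_curry CC f) xi ->
  ns_act D (phi2_eq CC Y (c_curry CC f)) zeta = 0%R ->
  t1' ∘ le_act L zeta m0t = le_act L xi ht ∘ t1 /\ t2' ∘ le_act L zeta m0t = t2.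
Proof.
move=> e1 e2; split.
  by rewrite -zeta_eq1 e1 (cmp_act_l L _ Hht H1).
by rewrite -zeta_eq2 e2 (le_act0 L H2).
Qed.

Lemma zeta_bwd xi (zeta : ns_grp D (times1 CC (c_curry CC f) Y)) :
  t1' ∘ le_act L zeta m0t = le_act L xi ht ∘ t1 -> t2' ∘ le_act L zeta m0t = t2 ->
  ns_act D (phi1_eq CC Y (c_curry CC f)) zeta = pull D (c_p1 CC X Y) (c_curry CC f) xi /\
  ns_act D (phi2_eq CC Y (c_curry CC f)) zeta = 0%R.
Proof.
move=> e1 e2; split.
  apply: (act_inj (L:=L) htt1_over); by rewrite zeta_eq1 e1 (cmp_act_l L _ Hht H1).
apply: (act_inj (L:=L) H2); by rewrite zeta_eq2 e2 (le_act0 L H2).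
Qed.

End Fixf.

Lemma exp_lift_at :
  (forall f : Hom C (c_prod CC X Y) Z,
    exists Phi : ns_grp D (c_curry CC f) -> ns_grp D f,
      (forall (xi : ns_grp D (c_curry CC f))
              (zeta : ns_grp D (times1 CC (c_curry CC f) Y)),
          ns_act D (phi1_eq CC Y (c_curry CC f)) zeta
            = pull D (c_p1 CC X Y) (c_curry CC f) xi ->
          ns_act D (phi2_eq CC Y (c_curry CC f)) zeta = 0%R ->
          Phi xi = ns_act D (ev_eq f) zeta) /\
      bijective Phi) ->
  exp_at t1' t2' tev t1 t2.
Proof.
move=> HPhi ft; set f := fmap p ft.
have [Phi [HP [g Hg1 Hg2]]] := HPhi f.
have [ht Hht] := le_full L (c_curry CC f).
have [m0t [m01 m02]] := prod_ex HPt (ht ∘ t1) t2.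
have K : forall xi mt, t1' ∘ mt = le_act L xi ht ∘ t1 -> t2' ∘ mt = t2 ->
    tev ∘ mt = le_act L (Phi xi) (tev ∘ m0t).
  move=> xi mt e1 e2.
  have Hmt : fmap p mt = times1 CC (c_curry CC f) Y.
    by rewrite (mt_over e1 e2) (le_act_fib L _ Hht).
  have [zeta ez] := le_transitive L (m0_over Hht m01 m02) Hmt.
  rewrite -ez in e1 e2 *.
  have [z1 z2] := zeta_bwd Hht m01 m02 e1 e2.
  by rewrite (HP xi zeta z1 z2) (zeta_ev Hht m01 m02).
have [al eal] := le_transitive L (ev_m0_over Hht m01 m02) (erefl f).
exists (le_act L (g al) ht); split.
  by move=> m e1 e2; rewrite (K _ _ e1 e2) Hg2.
move=> ht' Hs.
have Hp' := spec_over Hs.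
have [xi' exi'] := le_transitive L Hht Hp'.
rewrite -exi'; congr (le_act L _ _).
have [mt [e1 e2]] := prod_ex HPt (ht' ∘ t1) t2.
have := Hs mt e1 e2; rewrite -exi' in e1; rewrite (K _ _ e1 e2) -eal => /(act_inj (L:=L) (ev_m0_over Hht m01 m02)) <-.
by rewrite Hg1.
Qed.

Lemma phi_of_exp (f : Hom C (c_prod CC X Y) Z) :
  exp_at t1' t2' tev t1 t2 ->
  exists Phi : ns_grp D (c_curry CC f) -> ns_grp D f,
      (forall (xi : ns_grp D (c_curry CC f))
              (zeta : ns_grp D (times1 CC (c_curry CC f) Y)),
          ns_act D (phi1_eq CC Y (c_curry CC f)) zeta
            = pull D (c_p1 CC X Y) (c_curry CC f) xi ->
          ns_act D (phi2_eq CC Y (c_curry CC f)) zeta = 0%R ->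
          Phi xi = ns_act D (ev_eq f) zeta) /\
      bijective Phi.
Proof.
move=> Hexp.
have [ht Hht] := le_full L (c_curry CC f).
have [m0t [m01 m02]] := prod_ex HPt (ht ∘ t1) t2.
have Kex : forall xi : ns_grp D (c_curry CC f), exists be : ns_grp D f,
    forall mt, t1' ∘ mt = le_act L xi ht ∘ t1 -> t2' ∘ mt = t2 ->
    tev ∘ mt = le_act L be (tev ∘ m0t).
  move=> xi; have [mx [e1 e2]] := prod_ex HPt (le_act L xi ht ∘ t1) t2.
  have Hmx : fmap p mx = times1 CC (c_curry CC f) Y.
    by rewrite (mt_over e1 e2) (le_act_fib L _ Hht).
  have [zeta ez] := le_transitive L (m0_over Hht m01 m02) Hmx.
  exists (ns_act D (ev_eq f) zeta) => mt e1' e2'.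
  have -> : mt = mx by apply: (prod_uniq HPt); rewrite ?e1 ?e2 ?e1' ?e2'.
  by rewrite -ez (zeta_ev Hht m01 m02).
pose Phi xi := proj1_sig (constructive_indefinite_description _ (Kex xi)).
have HK : forall xi mt, t1' ∘ mt = le_act L xi ht ∘ t1 -> t2' ∘ mt = t2 ->
    tev ∘ mt = le_act L (Phi xi) (tev ∘ m0t).
  by move=> xi; rewrite /Phi; case: constructive_indefinite_description.
have Hev0 := ev_m0_over Hht m01 m02.
exists Phi; split.
  move=> xi zeta z1 z2.
  have [e1 e2] := zeta_fwd Hht m01 m02 z1 z2.
  apply: (act_inj (L:=L) Hev0); by rewrite -(HK xi _ e1 e2) (zeta_ev Hht m01 m02).
apply: inj_surj_bij.
  move=> xi xi' e.
  case: (Hexp (le_act L (Phi xi) (tev ∘ m0t))) => h0 [_ Hu].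
  apply: (act_inj (L:=L) Hht).
  rewrite -(Hu _ (HK xi)) (Hu (le_act L xi' ht)) // => mt e1 e2.
  by rewrite (HK _ _ e1 e2) e.
move=> be.
case: (Hexp (le_act L be (tev ∘ m0t))) => h0 [Hs _].
have Hp0 : fmap p h0 = c_curry CC f.
  by rewrite (spec_over Hs) (le_act_fib L _ Hev0).
have [xi exi] := le_transitive L Hht Hp0.
exists xi.
have [mx [e1 e2]] := prod_ex HPt (h0 ∘ t1) t2.
have ev1 := Hs mx e1 e2.
rewrite -exi in e1.
apply: (act_inj (L:=L) Hev0).
by rewrite -ev1 (HK _ _ e1 e2).
Qed.

End ExpCore.



Section Main1.
Context {O : Type} {C E : Category O} {D : NatSys C} {p : IOFunctor E C}
  (L : LinExt D p).


Lemma term_pres T : is_terminal E T -> is_terminal C T.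
Proof.
move=> HT X; case: (HT X) => h0 [_ Hu].
exists (fmap p h0); split=> // f _.
have [ft Hft] := le_full L f.
by rewrite -Hft -(Hu ft).
Qed.

Lemma prod_pres (CC : CCC C) {X Y P} (q1 : Hom E P X) (q2 : Hom E P Y) :
  cartesian_ns D -> is_product E q1 q2 -> is_product C (fmap p q1) (fmap p q2).
Proof.
move=> Hc HE.
have [ct1 H1] := le_full L (c_p1 CC X Y).
have [ct2 H2] := le_full L (c_p2 CC X Y).
have HPc := lift_prod L Hc (@ccc_prod _ _ CC _ _) H1 H2.
have [u [w [u1 u2 w1 w2 [uw wu]]]] := prod_iso HE HPc.
have uniq : forall Z (h h' : Hom C Z P), fmap p q1 ∘ h = fmap p q1 ∘ h' ->
    fmap p q2 ∘ h = fmap p q2 ∘ h' -> h = h'.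
  move=> Z h h' e1 e2.
  have e : fmap p u ∘ h = fmap p u ∘ h'.
    apply: (prod_uniq (@ccc_prod _ _ CC _ _)).
      by rewrite !cmp_assoc -H1 -fmap_cmp u1.
    by rewrite !cmp_assoc -H2 -fmap_cmp u2.
  by rewrite -[h]cmp_id_l -[h']cmp_id_l -(fmap_id p) -wu fmap_cmp -!cmp_assoc e.
move=> Z f g.
have [ft Hft] := le_full L f.
have [gt Hgt] := le_full L g.
have [h [h1 h2]] := prod_ex HE ft gt.
exists (fmap p h); split.
  by rewrite -!fmap_cmp h1 h2.
move=> h' [e1 e2]; apply: uniq; [rewrite e1 | rewrite e2];
  by rewrite -fmap_cmp ?h1 ?h2.
Qed.

Lemma exp_transfer {Y Z Ex1 P1 Ex0 P0} (q1 : Hom E P1 Ex1) (q2 : Hom E P1 Y)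
  (ev1 : Hom E P1 Z) (c1 : Hom C P0 Ex0) (c2 : Hom C P0 Y) (ev0 : Hom C P0 Z)
  (ct1 : Hom E P0 Ex0) (ct2 : Hom E P0 Y) :
  cartesian_ns D -> is_exponential E q1 q2 ev1 ->
  is_exponential C (fmap p q1) (fmap p q2) (fmap p ev1) ->
  is_exponential C c1 c2 ev0 -> fmap p ct1 = c1 -> fmap p ct2 = c2 ->
  exists tev, fmap p tev = ev0 /\ is_exponential E ct1 ct2 tev.
Proof.
move=> Hc HE1 HC1 HC0 Hc1 Hc2.
have [u [w [m0 [uw wu m01 m02 em0]]]] := exp_unique_iso HC1 HC0.
have [ut Hut] := le_full L u.
have [wt Hwt] := le_full L w.
have [wt' [wtl wtr]] := lift_iso L Hut Hwt wu uw.
have HPt0 := lift_prod L Hc HC0.1 Hc1 Hc2.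
have [mt0 [mt01 mt02]] := prod_ex HE1.1 (ut ∘ ct1) ct2.
have Hex := exp_iso HE1 HPt0 wtr wtl mt01 mt02.
exists (ev1 ∘ mt0); split=> //; rewrite fmap_cmp.
have -> : fmap p mt0 = m0.
  apply: (prod_uniq HC1.1); rewrite -?fmap_cmp ?mt01 ?mt02 ?m01 ?m02 ?fmap_cmp ?Hut ?Hc1 //.
by rewrite em0.
Qed.

Lemma eprod_exists : is_ccc E -> ccc_functor p ->
  forall n (Xs : 'I_n -> O), exists P (prt : forall k, Hom E P (Xs k)),
    is_nproduct E Xs P prt /\ is_nproduct C Xs P (fun k => fmap p (prt k)).
Proof.
move=> HE Hp; elim=> [|n IH] Xs.
  case: HE => [[T HT] _].
  exists T, (fun k => match ord0_False k with end).
  by split; apply: term0; [exact: HT | exact: Hp.1 _ HT].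
have [R [rrt [HR HRc]]] := IH (fun j => Xs (lift ord0 j)).
have [P [q1 [q2 HP]]] := HE.2.1 (Xs ord0) R.
exists P, (prS rrt q1 q2); split; first exact: nprodS HR HP.
have -> : (fun k => fmap p (prS rrt q1 q2 k)) =
          prS (fun j => fmap p (rrt j)) (fmap p q1) (fmap p q2).
  apply: functional_extensionality_dep => k.
  by case: (unliftP ord0 k) => [j ->|->]; rewrite ?prSl ?prS0 ?fmap_cmp.
exact: nprodS HRc (Hp.2.1 _ _ _ _ _ HP).
Qed.

Lemma cart_of_ccc : is_ccc E -> ccc_functor p -> cartesian_ns D.
Proof.
move=> HE Hp n Xs P pr HC.
have [P' [prt [HE' HC']]] := eprod_exists HE Hp Xs.
have [u [w [Hu uw wu]]] := nprod_iso HC HC'.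
have [ut Hut] := le_full L u.
have [wt Hwt] := le_full L w.
have [wt' [wtl wtr]] := lift_iso L Hut Hwt wu uw.
have HEt := nprod_transport HE' wtr wtl.
apply: (np_cart L HC _ HEt) => k.
by rewrite fmap_cmp Hut Hu.
Qed.

Section WithCC.
Variable CC : CCC C.

Lemma lifted_exp : ccc_ns CC D -> forall Y Z,
  exists t1' t2' tev,
    [/\ fmap p t1' = c_p1 CC (c_exp CC Z Y) Y, fmap p t2' = c_p2 CC (c_exp CC Z Y) Y,
        fmap p tev = c_ev CC Y Z & is_exponential E t1' t2' tev].
Proof.
move=> [Hc HPhi] Y Z.
have [t1' H1'] := le_full L (c_p1 CC (c_exp CC Z Y) Y).
have [t2' H2'] := le_full L (c_p2 CC (c_exp CC Z Y) Y).
have [tev Hev] := le_full L (c_ev CC Y Z).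
have HPt := lift_prod L Hc (@ccc_prod _ _ CC _ _) H1' H2'.
exists t1', t2', tev; split=> //.
apply: exp_of_at => // X.
have [t1 H1] := le_full L (c_p1 CC X Y).
have [t2 H2] := le_full L (c_p2 CC X Y).
have HQ := lift_prod L Hc (@ccc_prod _ _ CC _ _) H1 H2.
exists (c_prod CC X Y), t1, t2; split; first exact: HQ.
have HH := exp_lift_at L H1' H2' Hev H1 H2 HPt (HPhi X Y Z).
exact: HH.
Qed.

Lemma exp_pres : ccc_ns CC D ->
  forall Y Z Ex P (q1 : Hom E P Ex) (q2 : Hom E P Y) (ev : Hom E P Z),
  is_exponential E q1 q2 ev -> is_exponential C (fmap p q1) (fmap p q2) (fmap p ev).
Proof.
move=> Hccc Y Z Ex P q1 q2 ev HE1.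
have [t1' [t2' [tev [H1' H2' Hev HE0]]]] := lifted_exp Hccc Y Z.
have [u [w [m0 [uw wu m01 m02 em0]]]] := exp_unique_iso HE0 HE1.
have HP1 := prod_pres CC Hccc.1 HE1.1.
have Hu1 : fmap p u ∘ fmap p w = cid C _ by rewrite -fmap_cmp uw fmap_id.
have Hu2 : fmap p w ∘ fmap p u = cid C _ by rewrite -fmap_cmp wu fmap_id.
have e1 : c_p1 CC (c_exp CC Z Y) Y ∘ fmap p m0 = fmap p u ∘ fmap p q1.
  by rewrite -H1' -!fmap_cmp m01.
have e2 : c_p2 CC (c_exp CC Z Y) Y ∘ fmap p m0 = fmap p q2.
  by rewrite -H2' -!fmap_cmp m02.
have := exp_iso (ccc_exp CC Y Z) HP1 Hu1 Hu2 e1 e2.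
by rewrite -Hev -fmap_cmp em0.
Qed.

Lemma part1 : ccc_ns CC D <-> (is_ccc E /\ ccc_functor p).
Proof.
split.
  move=> Hccc; have Hc := Hccc.1.
  split.
    have HT := lift_term L Hc (ccc_term CC).
    split; first by exists (c_one CC).
    split.
      move=> X Y.
      have [t1 H1] := le_full L (c_p1 CC X Y).
      have [t2 H2] := le_full L (c_p2 CC X Y).
      have HQ := lift_prod L Hc (@ccc_prod _ _ CC _ _) H1 H2.
      by exists (c_prod CC X Y), t1, t2.
    move=> Y Z; have [t1' [t2' [tev [_ _ _ HE0]]]] := lifted_exp Hccc Y Z.
    by exists (c_exp CC Z Y), (c_prod CC (c_exp CC Z Y) Y), t1', t2', tev.
  split; first exact: term_pres.
  split; first by move=> X Y P q1 q2 H; have HH := prod_pres CC Hc H.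
  exact: exp_pres Hccc.
move=> [HE Hp]; have Hc := cart_of_ccc HE Hp.
split=> // X Y Z f.
have [Ex1 [P1 [q1 [q2 [ev1 HE1]]]]] := HE.2.2 Y Z.
have HC1 := Hp.2.2 _ _ _ _ _ _ _ HE1.
have [t1' H1'] := le_full L (c_p1 CC (c_exp CC Z Y) Y).
have [t2' H2'] := le_full L (c_p2 CC (c_exp CC Z Y) Y).
have [tev [Hev HE0]] := exp_transfer Hc HE1 HC1 (ccc_exp CC Y Z) H1' H2'.
have [t1 H1] := le_full L (c_p1 CC X Y).
have [t2 H2] := le_full L (c_p2 CC X Y).
have HQ := lift_prod L Hc (@ccc_prod _ _ CC _ _) H1 H2.
have HX := HE0.2 _ _ _ _ HQ. have HY := phi_of_exp L H1' H2' Hev H1 H2 HE0.1 f HX. exact: HY.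
Qed.

End WithCC.
End Main1.

Unset Implicit Arguments.



Section Part2.
Context {S : Type} {C E : Category (BiMag S)} {D : NatSys C} {p : IOFunctor E C}
  (L : LinExt D p) (CC : CCC C) (Hccc : ccc_ns CC D)
  (iota : forall X Y : BiMag S, Tm X Y -> Hom C X Y) (Hs : sorted_ccc iota).

Lemma Hteq {X Y} {t u : Tm X Y} : teq t u -> iota X Y t = iota X Y u.
Proof. exact: Hs.1. Qed.
Lemma Hid X : iota X X (tid X) = cid C X.
Proof. exact: Hs.2.1. Qed.
Lemma Hcmp X Y Z (t : Tm Y Z) (u : Tm X Y) :
  iota X Z (tcmp t u) = iota Y Z t ∘ iota X Y u.
Proof. exact: Hs.2.2.1. Qed.
Lemma Hprod X Y : is_product C (iota _ _ (tp1 X Y)) (iota _ _ (tp2 X Y)).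
Proof. exact: Hs.2.2.2.2.1. Qed.
Lemma Hexp Y Z : is_exponential C (iota _ _ (tp1 (bexp Z Y) Y))
                                   (iota _ _ (tp2 (bexp Z Y) Y)) (iota _ _ (tev Y Z)).
Proof. exact: Hs.2.2.2.2.2. Qed.

Definition liftf {X Y} (f : Hom C X Y) : Hom E X Y :=
  proj1_sig (constructive_indefinite_description _ (le_full L f)).
Lemma liftfP {X Y} (f : Hom C X Y) : fmap p (liftf f) = f.
Proof. exact: proj2_sig (constructive_indefinite_description _ (le_full L f)). Qed.

Definition tp1t X Y := liftf (iota _ _ (tp1 X Y)).
Definition tp2t X Y := liftf (iota _ _ (tp2 X Y)).

Lemma HPi X Y : is_product E (tp1t X Y) (tp2t X Y).
Proof. have H := lift_prod L Hccc.1 (Hprod X Y) (liftfP _) (liftfP _); exact: H. Qed.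

Definition pairE {Z X Y} (f : Hom E Z X) (g : Hom E Z Y) : Hom E Z (bprod X Y) :=
  proj1_sig (constructive_indefinite_description _ (prod_ex (HPi X Y) f g)).
Lemma pairE1 Z X Y (f : Hom E Z X) (g : Hom E Z Y) : tp1t X Y ∘ pairE f g = f.
Proof. exact: (proj2_sig (constructive_indefinite_description _ (prod_ex (HPi X Y) f g))).1. Qed.
Lemma pairE2 Z X Y (f : Hom E Z X) (g : Hom E Z Y) : tp2t X Y ∘ pairE f g = g.
Proof. exact: (proj2_sig (constructive_indefinite_description _ (prod_ex (HPi X Y) f g))).2. Qed.

Lemma evt_ex Y Z : exists ev0, fmap p ev0 = iota _ _ (tev Y Z) /\
  is_exponential E (tp1t (bexp Z Y) Y) (tp2t (bexp Z Y) Y) ev0.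
Proof.
have [t1' [t2' [ev0 [H1' H2' Hev HE0]]]] := lifted_exp L Hccc Y Z.
have HC0 : is_exponential C (fmap p t1') (fmap p t2') (fmap p ev0).
  by rewrite H1' H2' Hev; exact: ccc_exp.
have HH := exp_transfer L Hccc.1 HE0 HC0 (Hexp Y Z) (liftfP (iota _ _ (tp1 (bexp Z Y) Y))) (liftfP (iota _ _ (tp2 (bexp Z Y) Y))). exact: HH.
Qed.

Definition evt Y Z := proj1_sig (constructive_indefinite_description _ (evt_ex Y Z)).
Lemma evtP Y Z : fmap p (evt Y Z) = iota _ _ (tev Y Z).
Proof. exact: (proj2_sig (constructive_indefinite_description _ (evt_ex Y Z))).1. Qed.
Lemma evtE Y Z : is_exponential E (tp1t (bexp Z Y) Y) (tp2t (bexp Z Y) Y) (evt Y Z).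
Proof. exact: (proj2_sig (constructive_indefinite_description _ (evt_ex Y Z))).2. Qed.

Definition curryE {X Y Z} (f : Hom E (bprod X Y) Z) : Hom E X (bexp Z Y) :=
  proj1_sig (constructive_indefinite_description _ ((evtE Y Z).2 X _ _ _ (HPi X Y) f)).

Lemma curryE_all {X Y Z} (f : Hom E (bprod X Y) Z) :
  (forall m, tp1t (bexp Z Y) Y ∘ m = curryE f ∘ tp1t X Y -> tp2t (bexp Z Y) Y ∘ m = tp2t X Y ->
     evt Y Z ∘ m = f) /\
  (forall h, (forall m, tp1t (bexp Z Y) Y ∘ m = h ∘ tp1t X Y -> tp2t (bexp Z Y) Y ∘ m = tp2t X Y ->
     evt Y Z ∘ m = f) -> curryE f = h).
Proof. exact: (proj2_sig (constructive_indefinite_description _ ((evtE Y Z).2 X _ _ _ (HPi X Y) f))). Qed.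

Definition bangE X : Hom E X bone := liftf (iota _ _ (tbang X)).

Lemma HTE : is_terminal E bone.
Proof. have H := lift_term L Hccc.1 Hs.2.2.2.1; exact: H. Qed.

Fixpoint tr {X Y} (t : Tm X Y) : Hom E X Y :=
  match t with
  | tid X => cid E X
  | tcmp _ _ _ t u => cmp E (tr t) (tr u)
  | tbang X => bangE X
  | tp1 X Y => tp1t X Y
  | tp2 X Y => tp2t X Y
  | tpair _ _ _ t u => pairE (tr t) (tr u)
  | tev Y Z => evt Y Z
  | tcurry _ _ _ t => curryE (tr t)
  end.

Lemma tr_sound X Y (t u : Tm X Y) : teq t u -> tr t = tr u.
Proof.
elim=> {X Y t u} /=.
- by [].
- by move=> X Y t u _ ->.
- by move=> X Y t u v _ -> _ ->.
- by move=> X Y Z t t' u u' _ -> _ ->.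
- by move=> Z X Y t t' u u' _ -> _ ->.
- by move=> X Y Z t t' _ ->.
- by move=> X Y t; rewrite cmp_id_l.
- by move=> X Y t; rewrite cmp_id_r.
- by move=> X Y Z W h g f; rewrite cmp_assoc.
- move=> X t; case: (HTE X) => h0 [_ Hu].
  by rewrite -(Hu (tr t) I) (Hu (bangE X) I).
- by move=> Z X Y t u; rewrite pairE1.
- by move=> Z X Y t u; rewrite pairE2.
- by move=> Z X Y h; apply: (prod_uniq (HPi X Y)); rewrite ?pairE1 ?pairE2.
- by move=> X Y Z t; apply: (curryE_all (tr t)).1; rewrite ?pairE1 ?pairE2.
- move=> X Y Z h; apply: (curryE_all _).2 => m e1 e2; congr (evt Y Z ∘ _).
  by apply: (prod_uniq (HPi _ _)); rewrite ?pairE1 ?pairE2.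
Qed.

Lemma tr_over : forall X Y (t : Tm X Y), fmap p (tr t) = iota X Y t.
Proof.
move=> X0 Y0; elim=> [X|X Y Z t IHt u IHu|X|X Y|X Y|Z X Y t IHt u IHu|Y Z|X Y Z t IHt] /=.
- by rewrite fmap_id Hid.
- by rewrite fmap_cmp IHt IHu Hcmp.
- exact: liftfP.
- exact: liftfP.
- exact: liftfP.
- have e1 : fmap p (tp1t X Y) = iota _ _ (tp1 X Y) := liftfP _.
  have e2 : fmap p (tp2t X Y) = iota _ _ (tp2 X Y) := liftfP _.
  apply: (prod_uniq (Hprod X Y)).
    by rewrite -{1}e1 -fmap_cmp pairE1 IHt -Hcmp (Hteq (teq_p1 _ _)).
  by rewrite -{1}e2 -fmap_cmp pairE2 IHu -Hcmp (Hteq (teq_p2 _ _)).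
- exact: evtP.
- have e1 : fmap p (tp1t X Y) = iota _ _ (tp1 X Y) := liftfP _.
  have e2 : fmap p (tp2t X Y) = iota _ _ (tp2 X Y) := liftfP _.
  have e1' : fmap p (tp1t (bexp Z Y) Y) = iota _ _ (tp1 (bexp Z Y) Y) := liftfP _.
  have e2' : fmap p (tp2t (bexp Z Y) Y) = iota _ _ (tp2 (bexp Z Y) Y) := liftfP _.
  case: ((Hexp Y Z).2 X _ _ _ (Hprod X Y) (iota _ _ t)) => h0 [_ Hu].
  rewrite -(Hu (iota _ _ (tcurry t))) ?(Hu (fmap p (curryE (tr t)))) //.
    move=> m em1 em2.
    pose mt := pairE (curryE (tr t) ∘ tp1t X Y) (tp2t X Y).
    have -> : m = fmap p mt.
      apply: (prod_uniq (Hprod (bexp Z Y) Y)).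
        by rewrite em1 -e1' -!fmap_cmp pairE1 fmap_cmp e1.
      by rewrite em2 -e2' -fmap_cmp pairE2 e2.
    by rewrite -evtP -fmap_cmp (curryE_all (tr t)).1 ?pairE1 ?pairE2.
  move=> m em1 em2.
  have -> : m = iota _ _ (tpair (tcmp (tcurry t) (tp1 X Y)) (tp2 X Y)).
    apply: (prod_uniq (Hprod (bexp Z Y) Y)).
      by rewrite em1 -(Hcmp _ _ _ (tp1 _ _)) (Hteq (teq_p1 _ _)) Hcmp.
    by rewrite em2 -Hcmp (Hteq (teq_p2 _ _)).
  by rewrite -Hcmp (Hteq (teq_beta _)).
Qed.

Lemma part2 : exists iotat : forall X Y : BiMag S, Tm X Y -> Hom E X Y,
  sorted_ccc iotat /\ (forall X Y (t : Tm X Y), fmap p (iotat X Y t) = iota X Y t).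
Proof.
exists (fun X Y t => tr t); split; last exact: tr_over.
split; first exact: tr_sound.
split; first by [].
split; first by [].
split; first exact: HTE.
split; first exact: HPi.
exact: evtE.
Qed.

End Part2.


Theorem mainTheorem3 :
  (forall (O : Type) (C : Category O) (CC : CCC C) (D : NatSys C)
          (E : Category O) (p : IOFunctor E C) (L : LinExt D p),
      ccc_ns CC D <-> (is_ccc E /\ ccc_functor p)) /\
  (forall (S : Type) (C : Category (BiMag S)) (CC : CCC C) (D : NatSys C)
          (E : Category (BiMag S)) (p : IOFunctor E C) (L : LinExt D p),
      ccc_ns CC D ->
      forall iota : forall X Y : BiMag S, Tm X Y -> Hom C X Y,
        sorted_ccc iota ->
        exists iotat : forall X Y : BiMag S, Tm X Y -> Hom E X Y,
          sorted_ccc iotat /\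
          (forall X Y (t : Tm X Y), fmap p (iotat X Y t) = iota X Y t)).
Proof.
split.
  by move=> O C CC D E p L; exact: (part1 L CC).
by move=> S C CC D E p L Hccc iota Hs; exact: (part2 L CC Hccc iota Hs).
Qed.
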